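(* Let $\mathcal{U}=\{\bm{x}_1,\dots,\bm{x}_{n_u}\}\subset\mathbb{R}^d$ be a finite set of unlabeled samples, and let $g_{\bm\theta}:\mathbb{R}^d\to\mathbb{R}^{m}\setminus\{0\}$ be a network with parameters $\bm\theta$, with normalized embedding $\tilde g(\bm x)=g_{\bm\theta}(\bm x)/\|g_{\bm\theta}(\bm x)\|_2$. Let $\mathcal{U}=\mathcal{S}_0\cup\mathcal{S}_1$ be a fixed partition (not depending on $\bm\theta$) into nonempty sets, where $\mathcal{S}_c$ is the set of samples whose classifier-predicted label is $\tilde y=c$, and let $\bm\nu_c=\frac{1}{|\mathcal{S}_c|}\sum_{\bm x\in\mathcal{S}_c}\tilde g(\bm x)$ and $\tilde{\bm\nu}_c=\bm\nu_c/\|\bm\nu_c\|$ (assumed $\bm\nu_c\neq 0$). Define the clustering objective $$\mathcal{R}(\bm\theta)=\frac{2}{n_u}\sum_{c\in\{0,1\}}\sum_{\bm x\in\mathcal{S}_c}\|\tilde g(\bm x)-\bm\nu_c\|^2$$ and the (pseudo-label complete-data) log-likelihood $$\ell(\bm\theta)=\sum_{\bm x\in\mathcal{U}}\sum_{y\in\{0,1\}}\mathbb{1}(\tilde y=y)\log p(\bm x,y\mid\bm\theta).$$ Assume each class-conditional distribution in representation space is a von Mises–Fisher distribution, $p(\bm x\mid y=c,\bm\theta)=c_d(\kappa)\,e^{\kappa\tilde{\bm\nu}_c^\top\tilde g(\bm x)}$ with fixed concentration parameter $\kappa>0$ and normalization constant $c_d(\kappa)$, and that the class prior is uniform, $p(y=0)=p(y=1)=1/2$.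 Then minimizing $\mathcal{R}(\bm\theta)$ over $\bm\theta$ is equivalent to maximizing $$L_1=\sum_{c\in\{0,1\}}\frac{|\mathcal{S}_c|}{n_u}\|\bm\nu_c\|^2,$$ maximizing $\ell(\bm\theta)$ over $\bm\theta$ is equivalent to maximizing $$L_2=\sum_{c\in\{0,1\}}\frac{|\mathcal{S}_c|}{n_u}\|\bm\nu_c\|,$$ and $L_1\le L_2$.
   Context: Here ''equivalent'' means the two objectives have the same set of optimizers over $\bm\theta$ (they differ by a strictly monotone transformation not depending on $\bm\theta$). The setting is positive-unlabeled learning: the labels of unlabeled samples are replaced by pseudo-labels $\tilde y=\arg\max_c f_c(\bm x)$ from a classifier $f$, and the latent class variable's posterior is taken to be the indicator $\mathbb{1}(\tilde y=y)$. *)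

(* Defs.v *)
From HB Require Import structures.
From mathcomp Require Import all_boot all_order all_algebra.
From mathcomp Require Import reals sequences exp.
Set Implicit Arguments. Unset Strict Implicit. Unset Printing Implicit Defensive.
Import Order.TTheory GRing.Theory Num.Theory.
Local Open Scope ring_scope.

Section PU.
Variable R : realType.

Definition dotv (m : nat) (u v : 'rV[R]_m) : R := \sum_(j < m) u 0 j * v 0 j.
Definition vnorm (m : nat) (v : 'rV[R]_m) : R := Num.sqrt (\sum_(j < m) v 0 j ^+ 2).
Definition normalize (m : nat) (v : 'rV[R]_m) : 'rV[R]_m := (vnorm v)^-1 *: v.

Variables (d m n : nat) (Theta : Type).
Variable (x : 'I_n -> 'rV[R]_d).
Variable (g : Theta -> 'rV[R]_d -> 'rV[R]_m).
Variable (ylab : 'rV[R]_d -> bool).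

Definition gt (th : Theta) (v : 'rV[R]_d) : 'rV[R]_m := normalize (g th v).

Definition Sc (c : bool) : {set 'I_n} := [set i | ylab (x i) == c].

Definition nuc (th : Theta) (c : bool) : 'rV[R]_m :=
  (#|Sc c|%:R)^-1 *: \sum_(i in Sc c) gt th (x i).

Definition Robj (th : Theta) : R :=
  2 / n%:R * \sum_(c : bool) \sum_(i in Sc c) vnorm (gt th (x i) - nuc th c) ^+ 2.

Definition loglik (p : Theta -> 'rV[R]_d -> bool -> R) (th : Theta) : R :=
  \sum_(i < n) \sum_(y : bool) (ylab (x i) == y)%:R * ln (p th (x i) y).

Definition L1 (th : Theta) : R :=
  \sum_(c : bool) #|Sc c|%:R / n%:R * vnorm (nuc th c) ^+ 2.
Definition L2 (th : Theta) : R :=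
  \sum_(c : bool) #|Sc c|%:R / n%:R * vnorm (nuc th c).

End PU.

(* "Minimizing f is equivalent to maximizing h": same set of optimizers. *)
Definition min_equiv_max (R : realType) (T : Type) (f h : T -> R) : Prop :=
  forall th, (forall th', f th <= f th') <-> (forall th', h th' <= h th).
Definition max_equiv_max (R : realType) (T : Type) (f h : T -> R) : Prop :=
  forall th, (forall th', f th' <= f th) <-> (forall th', h th' <= h th).

(* Main.v *)
Require Import Defs.
From HB Require Import structures.
From mathcomp Require Import all_boot all_order all_algebra.
From mathcomp Require Import reals sequences exp.
Import Order.TTheory GRing.Theory Num.Theory.
Local Open Scope ring_scope.
From mathcomp Require Import ring lra.
Set Implicit Arguments. Unset Strict Implicit.

Section H.
Variable R : realType.
Variable m : nat.
Implicit Types u v w : 'rV[R]_m.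

Lemma dotvC u v : dotv u v = dotv v u.
Proof. by apply: eq_bigr => j _; rewrite mulrC. Qed.
Lemma dotvDl u v w : dotv (u + v) w = dotv u w + dotv v w.
Proof. by rewrite /dotv -big_split; apply: eq_bigr => j _; rewrite mxE mulrDl. Qed.
Lemma dotvNl u w : dotv (- u) w = - dotv u w.
Proof. by rewrite /dotv -sumrN; apply: eq_bigr => j _; rewrite mxE mulNr. Qed.
Lemma dotvZl a u w : dotv (a *: u) w = a * dotv u w.
Proof. by rewrite /dotv mulr_sumr; apply: eq_bigr => j _; rewrite mxE mulrA. Qed.
Lemma dotv0l w : dotv 0 w = 0.
Proof. by rewrite /dotv big1 // => j _; rewrite mxE mul0r. Qed.
Lemma dotv_suml (I : finType) (P : pred I) (F : I -> 'rV[R]_m) w :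
  dotv (\sum_(i | P i) F i) w = \sum_(i | P i) dotv (F i) w.
Proof.
by apply: (big_morph (fun u => dotv u w)) => [u v|]; [exact: dotvDl|exact: dotv0l].
Qed.
Lemma dotv_ge0 v : 0 <= dotv v v.
Proof. by apply: sumr_ge0 => j _; rewrite -expr2 sqr_ge0. Qed.
Lemma vnormE v : vnorm v = Num.sqrt (dotv v v).
Proof. by rewrite /vnorm; congr Num.sqrt; apply: eq_bigr => j _; rewrite expr2. Qed.
Lemma vnorm2 v : vnorm v ^+ 2 = dotv v v.
Proof. by rewrite vnormE sqr_sqrtr // dotv_ge0. Qed.
Lemma vnorm_ge0 v : 0 <= vnorm v.
Proof. by rewrite vnormE sqrtr_ge0. Qed.
Lemma dotv_neq0 v : v != 0 -> dotv v v != 0.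
Proof.
move=> hv; apply/negP => /eqP h; move/negP: hv; apply; apply/eqP.
apply/matrixP => i j; rewrite (ord1 i) mxE.
have H := psumr_eq0P (fun k (_ : true) => ltac:(by rewrite -expr2 sqr_ge0) : 0 <= v 0 k * v 0 k) h.
by move: (H j isT) => /eqP; rewrite mulf_eq0 orbb => /eqP.
Qed.
Lemma normalize1 v : v != 0 -> dotv (normalize v) (normalize v) = 1.
Proof.
move=> hv; rewrite /normalize dotvZl dotvC dotvZl -vnorm2.
have : vnorm v != 0 by apply/eqP => h0; move: (@dotv_neq0 v hv); rewrite -vnorm2 h0 expr0n eqxx.
move=> h; by field.
Qed.
Lemma dot_normalize v w : dotv (normalize v) w = (vnorm v)^-1 * dotv v w.
Proof. by rewrite /normalize dotvZl. Qed.

Lemma class_id (I : finType) (A : {set I}) (G : I -> 'rV[R]_m) :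
  (forall i, dotv (G i) (G i) = 1) -> (0 < #|A|)%N ->
  let nu := (#|A|%:R)^-1 *: \sum_(i in A) G i in
  \sum_(i in A) dotv (G i - nu) (G i - nu) = #|A|%:R - #|A|%:R * dotv nu nu.
Proof.
move=> hG hA nu.
have hN : (#|A|%:R : R) != 0 by rewrite pnatr_eq0 -lt0n.
have hs : \sum_(i in A) G i = #|A|%:R *: nu by rewrite /nu scalerA divff // scale1r.
have e : forall i, dotv (G i - nu) (G i - nu) = 1 - 2 * dotv (G i) nu + dotv nu nu.
  move=> i; rewrite !dotvDl !dotvNl (dotvC _ (G i - nu)) (dotvC _ (G i - nu)).
  rewrite !dotvDl !dotvNl hG (dotvC nu (G i)); ring.
rewrite (eq_bigr _ (fun i _ => e i)) big_split big_split /=.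
rewrite sumrN -mulr_sumr -dotv_suml hs dotvZl !sumr_const; ring.
Qed.
End H.

Lemma sumSc (R : realType) (d n : nat) (x : 'I_n -> 'rV[R]_d) (ylab : 'rV[R]_d -> bool)
  (F : bool -> 'I_n -> R) :
  \sum_(c : bool) \sum_(i in Sc x ylab c) F c i = \sum_(i < n) F (ylab (x i)) i.
Proof.
rewrite big_bool /= [RHS](bigID (fun i => ylab (x i))) /=; congr (_ + _).
  rewrite big_mkcond [RHS]big_mkcond; apply: eq_bigr => i _.
  by rewrite /Sc inE; case: (ylab (x i)).
rewrite big_mkcond [RHS]big_mkcond; apply: eq_bigr => i _.
by rewrite /Sc inE; case: (ylab (x i)).
Qed.

Unset Implicit Arguments. Set Strict Implicit.

Theorem theorem1 (R : realType) (d m n : nat) (Theta : Type)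
  (x : 'I_n -> 'rV[R]_d) (hx : injective x)
  (g : Theta -> 'rV[R]_d -> 'rV[R]_m) (hg : forall th v, g th v != 0)
  (ylab : 'rV[R]_d -> bool)
  (hS : forall c : bool, exists i : 'I_n, ylab (x i) = c)
  (hnu : forall th (c : bool), nuc x g ylab th c != 0)
  (kappa cd : R) (hkappa : 0 < kappa) (hcd : 0 < cd)
  (p : Theta -> 'rV[R]_d -> bool -> R)
  (hp : forall th v (c : bool),
      p th v c = 2^-1 * (cd * expR (kappa *
                   dotv (normalize (nuc x g ylab th c)) (gt g th v)))) :
  min_equiv_max (Robj x g ylab) (L1 x g ylab) /\
  max_equiv_max (loglik x ylab p) (L2 x g ylab) /\
  (forall th, L1 x g ylab th <= L2 x g ylab th).
Proof.
have hN : forall c, (0 < #|Sc x ylab c|)%N.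
  move=> c; case: (hS c) => i hi; apply/card_gt0P; exists i; by rewrite inE hi.
have hn : (0 < n)%N by case: (hS true) => i _; exact: (leq_ltn_trans (leq0n i) (ltn_ord i)).
have hnR : (n%:R : R) != 0 by rewrite pnatr_eq0 -lt0n.
have sumN : \sum_(c : bool) (#|Sc x ylab c|%:R : R) = n%:R.
  have -> : (n%:R : R) = \sum_(i < n) 1 by rewrite sumr_const card_ord.
  rewrite -(sumSc x ylab (fun _ _ => (1 : R))).
  by apply: eq_bigr => c _; rewrite sumr_const.
have g1 : forall th i, dotv (gt g th (x i)) (gt g th (x i)) = 1.
  by move=> th i; rewrite /gt normalize1.
have cid : forall th c, \sum_(i in Sc x ylab c) vnorm (gt g th (x i) - nuc x g ylab th c) ^+ 2
   = #|Sc x ylab c|%:R - #|Sc x ylab c|%:R * vnorm (nuc x g ylab th c) ^+ 2.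
  move=> th c; rewrite vnorm2 -(@class_id _ _ _ _ (fun i => gt g th (x i)) (fun i => g1 th i) (hN c)).
  by apply: eq_bigr => i _; rewrite vnorm2.
have RE : forall th, Robj x g ylab th = 2 - 2 * L1 x g ylab th.
  move=> th; rewrite /Robj /L1 (eq_bigr _ (fun c _ => cid th c)) sumrB sumN.
  under [in RHS]eq_bigr => c _ do rewrite mulrAC.
  by rewrite -mulr_suml /=; field.
have LE : forall th, loglik x ylab p th = n%:R * (ln (2^-1) + ln cd) + kappa * n%:R * L2 x g ylab th.
  move=> th; rewrite /loglik.
  have e1 : forall i : 'I_n, \sum_(y : bool) (ylab (x i) == y)%:R * ln (p th (x i) y)
     = ln (2^-1) + ln cd + kappa * dotv (normalize (nuc x g ylab th (ylab (x i)))) (gt g th (x i)).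
    move=> i.
    have -> : \sum_(y : bool) (ylab (x i) == y)%:R * ln (p th (x i) y) = ln (p th (x i) (ylab (x i))).
      by rewrite big_bool /=; case: (ylab (x i)); rewrite /= ?mul1r ?mul0r ?addr0 ?add0r.
    rewrite hp lnM ?posrE ?invr_gt0 ?ltr0n ?mulr_gt0 ?expR_gt0 //.
    by rewrite lnM ?posrE ?expR_gt0 // expRK addrA.
  rewrite (eq_bigr _ (fun i _ => e1 i)) big_split /= sumr_const card_ord -mulr_sumr.
  rewrite -(sumSc x ylab (fun c i => dotv (normalize (nuc x g ylab th c)) (gt g th (x i)))).
  have e2 : forall c, \sum_(i in Sc x ylab c) dotv (normalize (nuc x g ylab th c)) (gt g th (x i))
     = #|Sc x ylab c|%:R * vnorm (nuc x g ylab th c).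
    move=> c; under eq_bigr => i _ do rewrite dotvC.
    have hs : \sum_(i in Sc x ylab c) gt g th (x i) = #|Sc x ylab c|%:R *: nuc x g ylab th c.
      by rewrite /nuc scalerA divff ?scale1r // pnatr_eq0 -lt0n hN.
    rewrite -dotv_suml hs dotvZl dotvC dot_normalize -vnorm2.
    case: (eqVneq (vnorm (nuc x g ylab th c)) 0) => [->|h]; first by rewrite invr0 !mul0r mulr0.
    by congr (_ * _); rewrite expr2 mulKf.
  rewrite (eq_bigr _ (fun c _ => e2 c)) /L2.
  rewrite -[in RHS]mulrA; congr (_ + _ * _); first by rewrite mulr_natl.
  rewrite mulr_sumr; apply: eq_bigr => c _. by field.
have hk : 0 < kappa * n%:R by rewrite mulr_gt0 // ltr0n.
split; first by move=> th; split => H th'; have := H th'; rewrite !RE; lra.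
split.
  move=> th; split => H th'; have := H th'; rewrite !LE.
    by rewrite lerD2l ler_pM2l.
  by rewrite lerD2l ler_pM2l.
move=> th; rewrite /L1 /L2; apply: ler_sum => c _.
apply: ler_wpM2l; first by rewrite divr_ge0 ?ler0n.
have v0 := vnorm_ge0 (nuc x g ylab th c).
have hNc : (0 : R) < #|Sc x ylab c|%:R by rewrite ltr0n.
have : 0 <= \sum_(i in Sc x ylab c) vnorm (gt g th (x i) - nuc x g ylab th c) ^+ 2.
  by apply: sumr_ge0 => i _; rewrite sqr_ge0.
rewrite cid => h.
have h1 : vnorm (nuc x g ylab th c) ^+ 2 <= 1.
  rewrite -(ler_pM2l hNc) mulr1 -subr_ge0 //.
have h2 : vnorm (nuc x g ylab th c) <= 1 by rewrite -(expr_le1 (n:=2)).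
move: v0 h2; set v := vnorm _ => v0 h2.
have -> : v ^+ 2 = v - v * (1 - v) by rewrite mulrBr mulr1 expr2 opprB addrC subrK.
by rewrite lerBlDr lerDl mulr_ge0 // subr_ge0.
Qed.
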